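(* For every integer $n\geq 1$, $$\mathrm{SH}_n=\sum_{\substack{\lambda\vdash n\\ \text{all parts }\lambda_i\text{ odd}}} z_\lambda^{-1}\,2^{\ell(\lambda)}(n+1)^{\ell(\lambda)-1}\,p_\lambda ,$$ where $\ell(\lambda)$ is the number of nonzero parts of $\lambda$ and $z_\lambda=\prod_i i^{m_i}m_i!$ when $\lambda$ has $m_i$ parts equal to $i$.
   Context: Work in the ring $\Lambda_{\mathbb Q}$ of symmetric functions with rational coefficients in variables $x=(x_1,x_2,\dots)$; $p_k$ denotes the power sum, $p_\lambda=p_{\lambda_1}p_{\lambda_2}\cdots$. For $f\in\Lambda_{\mathbb Q}$, its shiftification $f(x/x)$ is obtained by writing $f$ as a polynomial in the power sums and substituting $p_{2i+1}\mapsto 2p_{2i+1}$ and $p_{2i}\mapsto 0$ for all $i\ge1$ (equivalently, $f(x/x)=(\omega_y f(x,y))|_{y=x}$, where $\omega_y$ is the involution $\omega$ acting on a second variable set $y$ only). A parking function of length $n$ is a sequence $(a_1,\dots,a_n)$ of positive integers whose weakly increasing rearrangement $b_1\le\cdots\le b_n$ satisfies $b_i\le i$ for all $i$. The symmetric group $S_n$ acts on the set of parking functions of length $n$ by permuting coordinates; $\mathrm{PF}_n$ denotes the Frobenius characteristic of this permutation representation ($\mathrm{PF}_0=1$). Define $\mathrm{SH}_n(x)=\mathrm{PF}_n(x/x)$. *)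

(* Defs.v *)
From HB Require Import structures.
From mathcomp Require Import all_boot all_order all_algebra all_fingroup.
From mathcomp Require Import mpoly.
Set Implicit Arguments. Unset Strict Implicit. Unset Printing Implicit Defensive.
Import GRing.Theory.
Local Open Scope ring_scope.

(* The degree-<= n part of Lambda_Q is modelled as Q[p_1,...,p_n]
   (power sums are algebraically independent); variable 'X_i stands for p_(i+1). *)
Notation Sym n := {mpoly rat[n]}.

(* power sum p_k (k >= 1); only k <= n is ever used *)
Definition psum (n k : nat) : Sym n :=
  match (insub k.-1 : option 'I_n) with Some i => 'X_i | None => 0 end.

(* parking functions of length n: a_i = val (a i) must be positive; values are
   drawn from {0..n}, which loses nothing since parking values are <= n *)
Definition parking (n : nat) (a : {ffun 'I_n -> 'I_n.+1}) : bool :=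
  ([forall i, 0 < (a i : nat)] &&
  (let b := sort leq [seq (a i : nat) | i <- enum 'I_n] in
   [forall i : 'I_n, nth 0 b i <= i.+1]))%N.

Definition pf_char (n : nat) (s : 'S_n) : nat :=
  #|[set a : {ffun 'I_n -> 'I_n.+1} | parking a & [ffun i => a (s i)] == a]|.

Definition p_cyc (n : nat) (s : 'S_n) : Sym n :=
  \prod_(C in porbits s) psum n #|C|.

Definition PF (n : nat) : Sym n :=
  (n`!%:R)^-1 * \sum_(s : 'S_n) (pf_char s)%:R * p_cyc s.

Definition shiftify (n : nat) (f : Sym n) : Sym n :=
  f \mPo [tuple (if odd i.+1 then 2%:R *: 'X_i else 0 : Sym n) | i < n].

Definition SH (n : nat) : Sym n := shiftify (PF n).

(* Partitions of n as multiplicity vectors: m i = number of parts equal to i+1 *)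
Definition is_partition (n : nat) (m : {ffun 'I_n -> 'I_n.+1}) : bool :=
  (\sum_(i < n) i.+1 * m i)%N == n.
Definition all_odd_parts (n : nat) (m : {ffun 'I_n -> 'I_n.+1}) : bool :=
  [forall i : 'I_n, ~~ odd i.+1 ==> ((m i : nat) == 0%N)].
Definition plen (n : nat) (m : {ffun 'I_n -> 'I_n.+1}) : nat :=
  (\sum_(i < n) m i)%N.
Definition zee (n : nat) (m : {ffun 'I_n -> 'I_n.+1}) : nat :=
  (\prod_(i < n) (i.+1 ^ m i * (m i)`!))%N.
Definition p_lam (n : nat) (m : {ffun 'I_n -> 'I_n.+1}) : Sym n :=
  \prod_(i < n) (psum n i.+1) ^+ m i.

(* Main.v *)
Require Import Defs.
From mathcomp Require Import all_boot all_order all_algebra all_fingroup.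
From mathcomp Require Import mpoly.
From mathcomp Require Import zify ring.
Set Implicit Arguments. Unset Strict Implicit. Unset Printing Implicit Defensive.

Lemma sorted_park (b : seq nat) : sorted leq b ->
  (forall i, i < size b -> nth 0 b i <= i.+1) <->
  (forall j, 0 < j <= size b -> j <= count (fun v => v <= j) b).
Proof.
move=> sb; split.
  move=> H j /andP [j0 jb].
  rewrite -(cat_take_drop j b) count_cat.
  have: all (fun v => v <= j) (take j b).
    apply/(all_nthP 0) => i; rewrite size_takel // => ij.
    by rewrite nth_take //; have := H i (leq_trans ij jb); lia.
  rewrite all_count => /eqP ->; rewrite size_takel //; lia.
move=> H i ib; rewrite leqNgt; apply/negP => bi.
have := H i.+1; rewrite ib /= => /(_ isT).
rewrite -(cat_take_drop i b) count_cat.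
have -> : count (fun v => v <= i.+1) (drop i b) = 0.
  apply/eqP; rewrite -leqn0 leqNgt -has_count; apply/negP => /(has_nthP 0) [k].
  rewrite size_drop nth_drop => kb.
  have : nth 0 b i <= nth 0 b (i + k).
    by apply: (sorted_leq_nth leq_trans leqnn) => //; rewrite ?inE /=; lia.
  lia.
rewrite addn0 => H2; have := count_size (fun v => v <= i.+1) (take i b).
rewrite size_takel ?(ltnW ib); lia.
Qed.

Lemma count_enum_card n (P : pred 'I_n) : count P (enum 'I_n) = #|[set i | P i]|.
Proof. by rewrite cardsE cardE -size_filter /enum_mem -enumT /= filter_predT. Qed.

Lemma parkingE n (a : {ffun 'I_n -> 'I_n.+1}) :
  parking a = [forall j : 'I_n, j.+1 <= #|[set i | 0 < a i <= j.+1]|].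
Proof.
rewrite /parking.
set s := [seq (a i : nat) | i <- enum 'I_n]; set b := sort leq s.
have sb : sorted leq b := sort_sorted leq_total s.
have szb : size b = n by rewrite size_sort size_map size_enum_ord.
have cnt j : count (fun v => v <= j) b = #|[set i | a i <= j]|.
  have pe : perm_eq b s by rewrite /b (perm_sort leq s) perm_refl.
  by rewrite (seq.permP pe) /s count_map count_enum_card.
have SP := sorted_park sb; rewrite szb in SP.
apply/idP/idP.
  case/andP => /forallP pos /forallP H.
  have H' : forall i, i < n -> nth 0 b i <= i.+1 by move=> i ilt; exact: (H (Ordinal ilt)).
  have := SP.1 H' => H2; apply/forallP => j.
  have := H2 j.+1; rewrite ltn_ord /= cnt => /(_ isT).
  suff -> : [set i | a i <= j.+1] = [set i | 0 < a i <= j.+1] by [].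
  by apply/setP => i; rewrite !inE pos.
move/forallP => H.
have pos : forall i, 0 < a i.
  move=> i0; rewrite lt0n; apply/negP => /eqP a0.
  have n0 : 0 < n by apply: leq_ltn_trans (ltn_ord i0).
  have hn : n.-1 < n by rewrite ltn_predL.
  have := H (Ordinal hn); rewrite /= prednK //.
  have : [set i | 0 < a i <= n] \subset ~: [set i0].
    by apply/subsetP => i; rewrite !inE; apply: contraTneq => ->; rewrite a0.
  move/subset_leq_card; rewrite cardsC1 card_ord => h1 h2.
  have := leq_trans h2 h1; lia.
apply/andP; split; first by apply/forallP.
apply/forallP => i; apply: (SP.2 _ i (ltn_ord i)) => j /andP [j0 jn].
have hj : j.-1 < n by lia.
have := H (Ordinal hj); rewrite /= prednK // cnt.
suff -> : [set i | a i <= j] = [set i | 0 < a i <= j] by [].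
by apply/setP => k; rewrite !inE pos.
Qed.

Section Cycle.
Variable n : nat.
Hypothesis n0 : 0 < n.
Variable Nv : nat -> nat.
Hypothesis tot : \sum_(v < n.+1) Nv v = n.

Definition G x := \sum_(t < x) Nv (t %% n.+1).
Definition good (r : nat) :=
  [forall j : 'I_n, j.+1 <= \sum_(t < j.+1) Nv ((t.+1 + r) %% n.+1)].

Lemma G_add a b : G (a + b) = G a + \sum_(t < b) Nv ((a + t) %% n.+1).
Proof. by rewrite /G big_split_ord. Qed.

Lemma period x : \sum_(t < n.+1) Nv ((x + t) %% n.+1) = n.
Proof.
elim: x => [|x IH].
  rewrite -[RHS]tot; apply: eq_bigr => t _; rewrite add0n modn_small //.
set g := fun t => Nv ((x + t) %% n.+1).
have e : \sum_(t < n.+1) Nv ((x.+1 + t) %% n.+1) = \sum_(t < n.+1) g t.+1.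
  by apply: eq_bigr => t _; rewrite /g addSnnS.
rewrite e; apply/eqP; rewrite -(eqn_add2l (g 0)).
have h1 := big_ord_recl n.+1 g; have h2 := big_ord_recr n.+1 g.
rewrite /= in h1 h2; rewrite -h1 h2 IH.
have -> : g n.+1 = g 0 by rewrite /g addn0 modnDr.
by rewrite addnC.
Qed.

Lemma G_shift x : G (x + n.+1) = G x + n.
Proof. by rewrite G_add period. Qed.

Lemma goodE r : good r = [forall j : 'I_n, G r.+1 + j.+1 <= G (r.+1 + j.+1)].
Proof.
apply: eq_forallb => j; rewrite G_add leq_add2l.
by congr (_ <= _); apply: eq_bigr => t _; rewrite addSnnS addnC.
Qed.

Lemma good_uniq r1 r2 : r1 < n.+1 -> r2 < n.+1 -> good r1 -> good r2 -> r1 = r2.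
Proof.
wlog lt12 : r1 r2 / r1 < r2.
  move=> W h1 h2 g1 g2; case: (ltngtP r1 r2) => [lt|lt|//].
    exact: W.
  by apply/esym; apply: W.
move=> h1 h2; rewrite !goodE => /forallP g1 /forallP g2.
have j1 : (r2 - r1).-1 < n by lia.
have j2 : (r1 + n.+1 - r2).-1 < n by lia.
have := g1 (Ordinal j1); have := g2 (Ordinal j2); rewrite /=.
rewrite !prednK; try lia.
have -> : r2.+1 + (r1 + n.+1 - r2) = r1.+1 + n.+1 by lia.
have -> : r1.+1 + (r2 - r1) = r2.+1 by lia.
rewrite G_shift; lia.
Qed.

Lemma good_exists : exists2 r, r < n.+1 & good r.
Proof.
pose F := fun i : 'I_n.+1 => G i.+1 + n.+1 - i.+1.
pose Pm := fun s => (0 < s <= n.+1) &&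
   [forall t : 'I_n.+2, (0 < t) ==> (G s + t <= G t + s)].
have exP : exists s, Pm s.
  case: (@arg_minnP _ ord0 xpredT F isT) => i _ Hi.
  exists i.+1; rewrite /Pm ltn_ord andTb; apply/forallP => t; apply/implyP => t0.
  have tl := ltn_ord t.
  have := Hi (inord t.-1) isT; rewrite /F inordK; last by lia.
  rewrite prednK //; have := ltn_ord i; lia.
case: (ex_minnP exP) => s /andP [/andP [s0 sM] /forallP Hs] smin.
exists s.-1; first by lia.
rewrite goodE prednK //; apply/forallP => j.
have jl := ltn_ord j.
case: (leqP (s + j.+1) n.+1) => sj.
  have := Hs (inord (s + j.+1)); rewrite inordK; last by lia.
  rewrite addn_gt0 ltn0Sn orbT /=; lia.
set t := s + j.+1 - n.+1.
have tpos : 0 < t by lia.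
have ts : t < s by lia.
have strict : G s + t < G t + s.
  rewrite ltnNge; apply/negP => le.
  have Pt : Pm t.
    rewrite /Pm tpos /=; apply/andP; split; first by lia.
    apply/forallP => u; apply/implyP => u0.
    have := Hs u; rewrite u0 /=; lia.
  have := smin t Pt; lia.
have -> : s + j.+1 = t + n.+1 by lia.
rewrite G_shift; lia.
Qed.

Lemma card_good : #|[set r : 'I_n.+1 | good r]| = 1.
Proof.
case: good_exists => r rl gr.
apply/eqP/cards1P; exists (Ordinal rl); apply/setP => r'; rewrite !inE.
apply/idP/eqP => [g'|->//].
by apply/val_inj; apply: good_uniq => //; rewrite ?inE ?ltn_ord.
Qed.

End Cycle.

Import GRing.Theory.

Section PermDecomp.
Variable T : finType.
Local Open Scope group_scope.
Implicit Types (s t u : {perm T}) (A B P S : {set T}).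

Lemma porbit_agree S s u v :
  (forall w, w \in S -> u w \in S) -> (forall w, w \in S -> s w = u w) ->
  v \in S -> porbit s v = porbit u v.
Proof.
move=> uS suS vS.
have key i : (s ^+ i) v = (u ^+ i) v /\ (u ^+ i) v \in S.
  elim: i => [|i [IH1 IH2]]; first by rewrite !expg0 !perm1.
  by rewrite !expgSr !permM IH1 suS // uS.
apply/porbit_setP => z; apply/porbitP/porbitP => -[i ->]; exists i;
  by case: (key i).
Qed.

Lemma porbit_stable s x v : (s v \in porbit s x) = (v \in porbit s x).
Proof.
rewrite -!eq_porbit_mem; have -> // : porbit s (s v) = porbit s v.
by have := porbit_perm s 1 v; rewrite expg1.
Qed.

Lemma porbit_stable' s x v : (v \in porbit s x) = (s v \in porbit s x).
Proof. by rewrite porbit_stable. Qed.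

Lemma porbit_sub A s x : perm_on A s -> x \in A -> porbit s x \subset A.
Proof.
move=> sA xA; apply/subsetP => z /porbitP [i ->].
elim: i => [|i IH]; first by rewrite expg0 perm1.
by rewrite expgSr permM perm_closed.
Qed.

Lemma porbit_out A s v : perm_on A s -> v \notin A -> porbit s v = [set v].
Proof.
move=> sA vA; apply/setP => z; rewrite inE; apply/porbitP/eqP => [[i ->]|->].
  by rewrite permX_fix // (out_perm sA).
by exists 0; rewrite expg0 perm1.
Qed.

Lemma porbits_eq s C D z : C \in porbits s -> D \in porbits s ->
  z \in C -> z \in D -> C = D.
Proof.
move=> /imsetP [a _ ->] /imsetP [b _ ->] za zb.
by move: za zb; rewrite -!eq_porbit_mem => /eqP <- /eqP <-.
Qed.

Definition W (R : comNzRingType) (y : nat -> R) A s : R :=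
  (\prod_(C in porbits s | C \subset A) y #|C|)%R.

Lemma porbit_in s x : porbit s x \in porbits s.
Proof. exact: imset_f. Qed.

Lemma W_split (R : comNzRingType) (y : nat -> R) A s x :
  perm_on A s -> x \in A ->
  W y A s = (y #|porbit s x| * W y (A :\: porbit s x) s)%R.
Proof.
move=> sA xA; rewrite /W (bigD1 (porbit s x)) /=; last first.
  by rewrite porbit_in porbit_sub.
congr (_ * _)%R; apply: eq_bigl => C.
case Cs: (C \in porbits s) => //=.
apply/andP/idP => [[CA CP]|CAP].
  apply/subsetP => z zC; rewrite inE (subsetP CA) // andbT.
  apply/negP => zP; move/negP: CP; apply; apply/eqP.
  exact: (porbits_eq Cs (porbit_in s x) zC zP).
split; first by apply: subset_trans CAP (subsetDl _ _).
apply/eqP => CP; have := subsetP CAP x; rewrite CP porbit_id inE => /(_ isT).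
by rewrite porbit_id.
Qed.

Lemma W_agree (R : comNzRingType) (y : nat -> R) B S s t :
  (forall w, w \in S -> t w \in S) -> (forall w, w \in S -> s w = t w) ->
  B \subset S -> W y B s = W y B t.
Proof.
move=> tS stS BS; rewrite /W; apply: eq_bigl => C.
apply/andP/andP => -[/imsetP [v _ ->] CB]; split => //;
  have vS : v \in S by apply: (subsetP BS); apply: (subsetP CB); exact: porbit_id.
  by rewrite (porbit_agree tS stS vS) porbit_in.
by rewrite -(porbit_agree tS stS vS) porbit_in.
Qed.

End PermDecomp.

Import GRing.Theory.

Section Fiber.
Variable T : finType.
Local Open Scope group_scope.
Implicit Types (s t u : {perm T}) (A B P S : {set T}).

Definition Cyc (x : T) P := [set s : {perm T} | perm_on P s & porbit s x == P].

Lemma perm_on_sub A B s : A \subset B -> perm_on A s -> perm_on B s.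
Proof. by move=> AB sA; apply: subset_trans sA AB. Qed.

Lemma mulE A P (σ t : {perm T}) : perm_on P σ -> perm_on (A :\: P) t ->
  forall v, (σ * t) v = if v \in P then σ v else t v.
Proof.
move=> sP tAP v; rewrite permM; case: ifP => vP.
  by rewrite (out_perm tAP) // inE perm_closed // vP.
by rewrite (out_perm sP) // vP.
Qed.

Lemma fix_in_f P s : (forall v, v \in P -> s v \in P) ->
  injective (fun v => if v \in P then s v else v).
Proof.
move=> sP a b; case: ifP => aP; case: ifP => bP.
- exact: perm_inj.
- by move=> e; move: (sP a aP); rewrite e bP.
- by move=> e; move: (sP b bP); rewrite -e aP.
- by [].
Qed.

Lemma fix_out_f P s : (forall v, (v \in P) = (s v \in P)) ->
  injective (fun v => if v \in P then v else s v).
Proof.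
move=> sP a b; case: ifP => aP; case: ifP => bP.
- by [].
- by move=> e; move: bP; rewrite sP -e aP.
- by move=> e; move: aP; rewrite sP e bP.
- exact: perm_inj.
Qed.

Lemma fiber (R : zmodType) (F : {perm T} -> R) A P x :
  x \in P -> P \subset A ->
  (\sum_(s | perm_on A s && (porbit s x == P)) F s =
   \sum_(σ in Cyc x P) \sum_(t | perm_on (A :\: P) t) F (σ * t)%g)%R.
Proof.
move=> xP PA.
rewrite pair_big_dep /=.
pose D := [set p : {perm T} * {perm T} | (p.1 \in Cyc x P) && perm_on (A :\: P) p.2].
pose h := fun p : {perm T} * {perm T} => p.1 * p.2.
have hinj : {in D &, injective h}.
  move=> [s1 t1] [s2 t2]; rewrite !inE /= => /andP [/andP [s1P _] t1P]
     /andP [/andP [s2P _] t2P] e.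
  have E1 := mulE s1P t1P; have E2 := mulE s2P t2P.
  have ev v := congr1 (fun p : {perm T} => p v) e.
  congr pair; apply/permP => v; have := ev v; rewrite /h /= E1 E2.
    by case: ifP => vP H //; rewrite (out_perm s1P) ?vP // (out_perm s2P) ?vP.
  by case: ifP => vP H //; rewrite (out_perm t1P) ?(out_perm t2P) // inE vP.
transitivity (\sum_(s in h @: D) F s)%R; last first.
  by rewrite (big_imset _ hinj); apply: eq_bigl => p; rewrite inE.
apply: eq_bigl => s; apply/andP/imsetP => [[sA /eqP sx]|[[σ t]]].
  have sP : forall v, v \in P -> s v \in P by move=> v; rewrite -sx porbit_stable.
  have sP' : forall v, (v \in P) = (s v \in P) by move=> v; rewrite -sx porbit_stable.
  pose σ := perm (fix_in_f sP); pose t := perm (fix_out_f sP').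
  exists (σ, t).
    rewrite inE /= !inE; apply/andP; split; first (apply/andP; split).
    - by apply/subsetP => v; rewrite inE permE; case: ifP => // _; rewrite eqxx.
    - rewrite -sx (@porbit_agree _ (porbit s x) σ s) ?porbit_id //.
        by move=> w; rewrite porbit_stable.
      by move=> w wP; rewrite permE -sx wP.
    - apply/subsetP => v; rewrite inE permE inE; case: ifP => vP; first by rewrite eqxx.
      by move=> svv; rewrite andTb; apply: (subsetP sA); rewrite inE.
  apply/permP => v; rewrite /h /= permM !permE; case vP: (v \in P).
    by rewrite (sP v vP).
  by rewrite vP.
rewrite inE /= inE => /andP [/andP [σP /eqP σx] tP] ->; rewrite /h /=.
have E := mulE σP tP.
split.
  apply: perm_onM; first exact: perm_on_sub PA σP.
  by apply: perm_on_sub tP; exact: subsetDl.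
apply/eqP; rewrite -σx; apply: porbit_agree (xP) => w wP.
- by rewrite -σx porbit_stable σx.
- by rewrite E wP.
Qed.

End Fiber.

Import GRing.Theory.

Section E.
Variable T : finType.
Implicit Types (s t u : {perm T}) (A B P S : {set T}).
Local Open Scope ring_scope.

Lemma Edecomp (R : comNzRingType) (y : nat -> R) A x : x \in A ->
  \sum_(s | perm_on A s) W y A s =
  \sum_(P in [set P : {set T} | (x \in P) && (P \subset A)])
     (y #|P| *+ #|Cyc x P| * \sum_(t | perm_on (A :\: P) t) W y (A :\: P) t).
Proof.
move=> xA.
rewrite (partition_big (fun s => porbit s x)
   (fun P => P \in [set P : {set T} | (x \in P) && (P \subset A)])); last first.
  by move=> s sA; rewrite inE porbit_id porbit_sub.
apply: eq_bigr => P; rewrite inE => /andP [xP PA].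
transitivity (\sum_(s | perm_on A s && (porbit s x == P)) (y #|P| * W y (A :\: P) s)).
  apply: eq_bigr => s /andP [sA /eqP sx]; by rewrite (W_split y sA xA) sx.
rewrite (@fiber T R _ A P x xP PA).
transitivity (\sum_(σ in Cyc x P) (y #|P| * \sum_(t | perm_on (A :\: P) t) W y (A :\: P) t)).
  apply: eq_bigr => σ; rewrite inE => /andP [σP _]; rewrite mulr_sumr.
  apply: eq_bigr => t tP; congr (_ * _).
  apply: (@W_agree _ _ _ _ (~: P)).
  - move=> w; rewrite !inE => wP; apply/negP => twP; move/negP: wP; apply.
    have tP' : perm_on (~: P) t by apply: perm_on_sub tP; apply/subsetP => z; rewrite !inE => /andP [].
    have := perm_closed w tP'; rewrite !inE twP /= => H.
    by apply/negPn; rewrite -H.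
  - by move=> w; rewrite inE => wP; rewrite (mulE σP tP) (negbTE wP).
  - by apply/subsetP => z; rewrite !inE => /andP [].
by rewrite sumr_const mulrnAl.
Qed.

End E.

Import GRing.Theory.

Section Count.
Variable T : finType.
Implicit Types (s t u : {perm T}) (A B P S Q : {set T}).
Local Open Scope ring_scope.

Lemma sum_subsets (R : zmodType) (g : nat -> R) B :
  \sum_(Q in [set Q : {set T} | Q \subset B]) g #|Q| =
  \sum_(j < #|B|.+1) g j *+ 'C(#|B|, j).
Proof.
rewrite (partition_big (fun Q : {set T} => (inord #|Q| : 'I_#|B|.+1)) xpredT) //.
apply: eq_bigr => j _.
transitivity (\sum_(Q in [set Q : {set T} | Q \subset B & #|Q| == j]) g j).
  rewrite (eq_bigl (fun Q : {set T} => Q \in [set Q : {set T} | Q \subset B & #|Q| == j])).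
    by apply: eq_bigr => Q; rewrite inE => /andP [_ /eqP ->].
  move=> Q; rewrite !inE; case QB: (Q \subset B) => //=.
  by rewrite -(inj_eq val_inj) /= inordK // ltnS subset_leq_card.
by rewrite sumr_const cards_draws.
Qed.

Lemma sum_Psets (R : zmodType) (f : nat -> R) A x : x \in A ->
  \sum_(P in [set P : {set T} | (x \in P) && (P \subset A)]) f #|P| =
  \sum_(j < #|A :\ x|.+1) f j.+1 *+ 'C(#|A :\ x|, j).
Proof.
move=> xA.
have hinj : {in [set Q : {set T} | Q \subset A :\ x] &, injective (fun Q => x |: Q)}.
  move=> Q1 Q2; rewrite !inE => Q1A Q2A e.
  have x1 : x \notin Q1 by apply/negP => /(subsetP Q1A); rewrite !inE eqxx.
  have x2 : x \notin Q2 by apply/negP => /(subsetP Q2A); rewrite !inE eqxx.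
  by rewrite -(setU1K x1) -(setU1K x2) e.
transitivity (\sum_(P in (fun Q => x |: Q) @: [set Q : {set T} | Q \subset A :\ x]) f #|P|).
  apply: eq_bigl => P; rewrite inE; apply/andP/imsetP => [[xP PA]|[Q]].
    exists (P :\ x); last by rewrite setD1K.
    by rewrite inE; apply: setSD.
  rewrite inE => QA ->; split; first by rewrite setU11.
  apply/subsetP => z; rewrite !inE => /orP [/eqP -> //|/(subsetP QA)].
  by rewrite inE => /andP [].
rewrite (big_imset _ hinj) /= -(sum_subsets (fun j => f j.+1)).
apply: eq_bigr => Q; rewrite inE => QA; rewrite cardsU1.
have -> : x \notin Q by apply/negP => /(subsetP QA); rewrite !inE eqxx.
by [].
Qed.

End Count.

Import GRing.Theory Num.Theory.

Section CycCount.
Variable T : finType.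
Implicit Types (s t u : {perm T}) (A B P S Q : {set T}).
Local Open Scope ring_scope.

Lemma sumW1 A : \sum_(s | perm_on A s) W (fun=> 1 : rat) A s = (#|A|`!)%:R.
Proof.
rewrite (eq_bigr (fun=> 1)) => [|s _]; last by rewrite /W big1.
by rewrite sumr_const card_perm.
Qed.

Lemma cardD_sub P A : P \subset A -> #|A :\: P| = (#|A| - #|P|)%N.
Proof. by move=> PA; rewrite cardsD (setIidPr PA). Qed.

Lemma card_Cyc k : forall (x : T) P, x \in P -> #|P| = k.+1 -> #|Cyc x P| = k`!.
Proof.
elim/ltn_ind: k => k IH x P0 xP cP.
have E := Edecomp (fun=> 1 : rat) xP.
rewrite sumW1 cP in E.
have E2 : ((k.+1)`!)%:R = \sum_(P in [set P : {set T} | (x \in P) && (P \subset P0)])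
     (((#|P|.-1)`! * (#|P0| - #|P|)`!)%N%:R : rat).
  have tt (a c : nat) : ((a%:R : rat) *+ c) = (a * c)%:R by rewrite natrM mulr_natr.
  rewrite (sum_Psets (fun j => (((j.-1)`! * (#|P0| - j)`!)%N%:R : rat)) xP).
  have cD : #|P0 :\ x| = k by move: cP; rewrite (cardsD1 x) xP add1n => -[].
  rewrite cD (eq_bigr (fun=> (k`!)%:R)); last first.
    move=> j _.
    rewrite tt /= cP subSS mulnC bin_fact //.
    idtac.
    by rewrite -ltnS.
  by rewrite sumr_const card_ord tt mulnC factS.
rewrite E2 in E.
have nz : forall P, P \in [set P : {set T} | (x \in P) && (P \subset P0)] -> P != P0 ->
   (((#|P|.-1)`! * (#|P0| - #|P|)`!)%N%:R : rat) =
   1 *+ #|Cyc x P| * \sum_(t | perm_on (P0 :\: P) t) W (fun=> 1 : rat) (P0 :\: P) t.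
  move=> P; rewrite inE => /andP [xP' PP0] neq.
  rewrite sumW1 cardD_sub // -natrM; congr (_%:R); congr (_ * _)%N.
  have cpos : (0 < #|P|)%N by apply/card_gt0P; exists x.
  have lt : (#|P| < #|P0|)%N by apply: proper_card; rewrite properEneq neq PP0.
  rewrite (IH (#|P|.-1)) //; first by rewrite cP in lt; lia.
  by rewrite prednK.
move: E; rewrite (bigD1 P0) /=; last by rewrite inE xP subxx.
rewrite [in X in _ = X -> _](bigD1 P0) /=; last by rewrite inE xP subxx.
rewrite (eq_bigr _ (fun P => fun h => nz P (andP h).1 (andP h).2)).
move/addIr; rewrite setDv sumW1 cards0 cP subnn /= mulr1 muln1.

by move/eqP; rewrite eqr_nat => /eqP ->.
Qed.

End CycCount.

Import GRing.Theory Num.Theory.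

Section Parts.
Variable N : nat.
Local Notation ptn := {ffun 'I_N -> 'I_N.+1}.
Implicit Types (m : ptn) (i : 'I_N).

Definition wt (m : ptn) := (\sum_(i < N) i.+1 * m i)%N.
Definition inc (i : 'I_N) (m : ptn) : ptn :=
  [ffun j => if j == i then inord (m j).+1 else m j].
Definition dec (i : 'I_N) (m : ptn) : ptn :=
  [ffun j => if j == i then inord (m j).-1 else m j].

Lemma inc_i i m : (m i < N)%N -> (inc i m i : nat) = (m i).+1.
Proof. by move=> lt; rewrite ffunE eqxx inordK. Qed.

Lemma wt_inc i m : (m i < N)%N -> wt (inc i m) = (wt m + i.+1)%N.
Proof.
move=> lt; rewrite /wt (bigD1 i) //= [in RHS](bigD1 i) //= inc_i //.
rewrite (eq_bigr (fun j : 'I_N => j.+1 * m j)%N); last first.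
  by move=> j ji; rewrite ffunE (negbTE ji).
ring.
Qed.

Lemma zee_inc i m : (m i < N)%N -> zee (inc i m) = (zee m * (i.+1 * (m i).+1))%N.
Proof.
move=> lt; rewrite /zee (bigD1 i) //= [in RHS](bigD1 i) //= inc_i //.
rewrite (eq_bigr (fun j : 'I_N => j.+1 ^ m j * (m j)`!)%N); last first.
  by move=> j ji; rewrite ffunE (negbTE ji).
rewrite expnS factS; ring.
Qed.

Lemma mi_le_wt i m : (m i <= wt m)%N.
Proof.
rewrite /wt (bigD1 i) //=; apply: leq_trans (leq_addr _ _).
by rewrite mulSn leq_addr.
Qed.

Lemma wt_ge i m : (i.+1 * m i <= wt m)%N.
Proof. by rewrite /wt (bigD1 i) //= leq_addr. Qed.

Variable R : comAlgType rat.
Variable y : nat -> R.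
Local Open Scope ring_scope.

Definition Ym (m : ptn) : R := \prod_(i < N) y i.+1 ^+ m i.
Definition cc k : R := \sum_(m : ptn | wt m == k) (zee m)%:R^-1 *: Ym m.

Lemma Ym_inc i m : (m i < N)%N -> Ym (inc i m) = y i.+1 * Ym m.
Proof.
move=> lt; rewrite /Ym (bigD1 i) //= [in RHS](bigD1 i) //= inc_i //.
rewrite exprS -mulrA; congr (_ * (_ * _)).
by apply: eq_bigr => j ji; rewrite ffunE (negbTE ji).
Qed.

End Parts.

Import GRing.Theory Num.Theory.

Section Rec.
Variable N : nat.
Local Notation ptn := {ffun 'I_N -> 'I_N.+1}.
Implicit Types (m : ptn) (i : 'I_N).
Variable R : comAlgType rat.
Variable y : nat -> R.
Local Open Scope ring_scope.

Lemma cc0 : cc N y 0 = 1.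
Proof.
rewrite /cc (big_pred1 [ffun=> ord0]); last first.
  move=> m; rewrite /wt sum_nat_eq0; apply/forallP/eqP => [H|->] .
    apply/ffunP => i; rewrite ffunE; apply/val_inj => /=.
    by have := H i; rewrite /= muln_eq0 /= => /eqP.
  by move=> i; rewrite ffunE /= muln0.
rewrite /zee /Ym (eq_bigr (fun=> 1%N)); last by move=> i _; rewrite ffunE.
rewrite big1_eq (eq_bigr (fun=> 1)); last by move=> i _; rewrite ffunE expr0.
by rewrite big1_eq invr1 scale1r.
Qed.

Lemma per_i i k : (k <= N)%N ->
  \sum_(m : ptn | wt m == k) (((i.+1 * m i)%N)%:R *: ((zee m)%:R^-1 *: Ym y m)) =
  if (i < k)%N then y i.+1 * cc N y (k - i.+1)%N else 0.
Proof.
move=> kN.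
rewrite (bigID (fun m : ptn => (0 < m i)%N)) /=.
rewrite [X in _ + X]big1 ?addr0; last first.
  by move=> m /andP [_]; rewrite lt0n negbK => /eqP ->; rewrite muln0 scale0r.
case: ifP => ik; last first.
  apply: big1 => m /andP [/eqP wk mi].
  have := wt_ge i m; rewrite wk => H.
  by exfalso; move: ik; rewrite (_ : (i < k)%N = true) //; nia.
rewrite (reindex_onto (inc i) (dec i)); last first.
  move=> m /andP [_ mi]; apply/ffunP => j; rewrite /inc /dec !ffunE.
  case: (j =P i) => [->|//]; apply/val_inj => /=.
  have h1 : ((m i).-1 < N.+1)%N by have := ltn_ord (m i); lia.
  by rewrite (inordK h1) prednK // inordK.
rewrite /cc mulr_sumr; apply: eq_big => m.
  have [lt|ge] := ltnP (m i) N.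
    rewrite wt_inc // inc_i // ltn0Sn andbT.
    have -> : dec i (inc i m) == m.
      apply/eqP/ffunP => j; rewrite /inc /dec !ffunE; case: (j =P i) => [->|//].
      have h2 : ((m i).+1 < N.+1)%N by lia.
      by apply/val_inj => /=; rewrite (inordK h2) /= inordK //; lia.
    rewrite andbT; apply/eqP/eqP; lia.
  have mN : (m i : nat) = N by have := ltn_ord (m i); lia.
  have -> : (inc i m i : nat) = 0%N.
    by rewrite ffunE eqxx /inord /insubd insubF //= mN ltnn.
  rewrite ltnn andbF /=; apply/esym/negbTE; apply/negP => /eqP wm.
  have := mi_le_wt i m; rewrite wm mN; lia.
move=> /andP [/andP [/eqP wk _] /eqP dm].
have lt : (m i < N)%N.
  apply/negPn/negP; rewrite -leqNgt => ge.
  have mN : (m i : nat) = N by have := ltn_ord (m i); lia.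
  move: dm; move/(congr1 (fun f : ptn => (f i : nat))); rewrite !ffunE eqxx.
  rewrite (_ : inord (m i).+1 = ord0 :> 'I_N.+1); last first.
    by apply/val_inj; rewrite /= /inord /insubd insubF //= mN ltnn.
  idtac.
  rewrite /= inordK //; have := ltn_ord i; move=> iN h0; rewrite -h0 in mN; lia.
rewrite zee_inc // Ym_inc // inc_i // scalerA scalerAr; congr (_ * (_ *: _)).
have a0 : ((i.+1 * (m i).+1)%N%:R : rat) != 0 by rewrite pnatr_eq0 muln_eq0.
by rewrite (natrM _ (zee m)) invfM mulrC -mulrA mulVf // mulr1.
Qed.

Lemma cc_rec k : (0 < k <= N)%N ->
  k%:R *: cc N y k = \sum_(j < k) y j.+1 * cc N y (k - j.+1)%N.
Proof.
move=> /andP [k0 kN].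
rewrite (big_ord_widen N (fun j => y j.+1 * cc N y (k - j.+1)%N)) // big_mkcond /=.
rewrite -(eq_bigr _ (fun i _ => per_i i kN)) exchange_big /= /cc scaler_sumr.
apply: eq_bigr => m /eqP wk.
by rewrite -scaler_suml -natr_sum -/(wt m) wk.
Qed.

End Rec.

Import GRing.Theory Num.Theory.

Section Main.
Variable T : finType.
Variable N : nat.
Hypothesis TN : (#|T| <= N)%N.
Variable R : comAlgType rat.
Variable y : nat -> R.
Local Open Scope ring_scope.

Lemma sc (a b c : nat) (u v : R) :
  (u *+ a) * (b%:R *: v) *+ c = (c * (a * b))%N%:R *: (u * v).
Proof.
rewrite -!scaler_nat -scalerAl -scalerAr !scalerA; congr (_ *: _).
by rewrite !natrM mulrA.
Qed.

Lemma perm_sum k : forall A : {set T}, #|A| = k ->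
  \sum_(s | perm_on A s) W y A s = (k`!)%:R *: cc N y k.
Proof.
elim/ltn_ind: k => k IH A cA.
case: k IH cA => [|k] IH cA.
  have A0 : A = set0 := cards0_eq cA.
  rewrite cc0 fact0 scale1r (eq_bigr (fun=> 1)); last first.
    move=> s _; rewrite /W big_pred0 // => C; apply/negbTE/negP => /andP [/imsetP [v _ ->]].
    by move/subsetP/(_ v (porbit_id s v)); rewrite A0 inE.
  by rewrite sumr_const card_perm cA.
have [x xA] : exists x, x \in A by apply/card_gt0P; rewrite cA.
have kN : (k.+1 <= N)%N by rewrite -cA (leq_trans (max_card _)).
have cD : #|A :\ x| = k by move: cA; rewrite (cardsD1 x) xA add1n => -[].
rewrite (Edecomp y xA).
rewrite (eq_bigr (fun P : {set T} => y #|P| *+ (#|P|.-1)`! * ((#|A| - #|P|)%N`!%:R *: cc N y (#|A| - #|P|)%N))); last first.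
  move=> P; rewrite inE => /andP [xP PA].
  have cpos : (0 < #|P|)%N by apply/card_gt0P; exists x.
  rewrite (card_Cyc (k := #|P|.-1) xP) ?prednK //.
  have ltA : (#|A :\: P| < k.+1)%N.
    rewrite cardD_sub // cA; lia.
  by rewrite (IH _ ltA) // cardD_sub.
rewrite (sum_Psets (fun j => y j *+ (j.-1)`! * ((#|A| - j)%N`!%:R *: cc N y (#|A| - j)%N)) xA).
rewrite cD cA.
rewrite (eq_bigr (fun j : 'I_k.+1 => k`!%:R *: (y j.+1 * cc N y (k.+1 - j.+1)%N))); last first.
  move=> j _ /=; rewrite subSS sc; congr (_ *: _); congr (_%:R).
  by rewrite bin_fact // -ltnS.
rewrite -scaler_sumr -(cc_rec y (k := k.+1)); last by rewrite kN.
by rewrite scalerA -natrM mulnC -factS.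
Qed.

End Main.

Section Inv.
Variables (T K : finType) (s : {perm T}).
Local Open Scope group_scope.

Definition sT := {C : {set T} | C \in porbits s}.
Definition pb (i : T) : sT := exist _ (porbit s i) (porbit_in s i).

Lemma sT_ex (C : sT) : exists x, x \in val C.
Proof. by case: C => C /= /imsetP [i _ ->]; exists i; apply: porbit_id. Qed.

Lemma inv_iter (a : {ffun T -> K}) : [ffun i => a (s i)] == a ->
  forall k i, a ((s ^+ k) i) = a i.
Proof.
move/eqP => e k i; have e1 j : a (s j) = a j by have := congr1 (fun f : {ffun T -> K} => f j) e; rewrite ffunE.
elim: k => [|k IH]; first by rewrite expg0 perm1.
by rewrite expgSr permM e1.
Qed.

Lemma card_inv :
  #|[set a : {ffun T -> K} | [ffun i => a (s i)] == a]| = (#|K| ^ #|porbits s|)%N.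
Proof.
pose g := fun h : {ffun sT -> K} => [ffun i => h (pb i)].
have ginj : injective g.
  move=> h1 h2 e; apply/ffunP => -[C CP].
  case/imsetP: (CP) => i _ Ci.
  have := congr1 (fun f : {ffun T -> K} => f i) e; rewrite !ffunE.
  by have -> : pb i = exist _ C CP by apply: val_inj; rewrite /= Ci.
have -> : [set a : {ffun T -> K} | [ffun i => a (s i)] == a] = g @: setT.
  apply/setP => a; rewrite inE; apply/idP/imsetP => [inv|[h _ ->]].
    exists [ffun C : sT => a (xchoose (sT_ex C))] => //.
    apply/ffunP => i; rewrite !ffunE /=.
    have := xchooseP (sT_ex (pb i)); rewrite /=.
    by case/porbitP => k ->; rewrite (inv_iter inv).
  apply/eqP/ffunP => i; rewrite !ffunE; congr (h _); apply: val_inj => /=.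
  by have := porbit_perm s 1 i; rewrite expg1.
rewrite card_imset // cardsT card_ffun; congr (_ ^ _)%N.
by rewrite card_sig.
Qed.

End Inv.

Import GRing.Theory.

Lemma mod2 M x : x < M + M -> x %% M = (if x < M then x else x - M).
Proof.
move=> h; case: ifP => lt; first by rewrite modn_small.
have le : M <= x by rewrite leqNgt lt.
by rewrite -{1}(subnK le) modnDr modn_small //; lia.
Qed.

Section Park.
Variable n : nat.
Hypothesis n0 : 0 < n.
Local Notation F := {ffun 'I_n -> 'I_n.+1}.

Definition shift (c : 'I_n.+1) (a : F) : F := [ffun i => (a i + c)%R].
Definition Nv (a : F) (v : nat) := #|[set i | (a i : nat) == v]|.

Lemma tot a : \sum_(v < n.+1) Nv a v = n.
Proof.
rewrite -[n in RHS]card_ord -sum1_card (partition_big (fun i => a i) xpredT) //.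
apply: eq_bigr => v _; rewrite /Nv -sum1_card; apply: eq_bigl => i.
by rewrite inE.
Qed.

Lemma count_vals (b : F) j : #|[set i | 0 < b i <= j]| = \sum_(t < j) #|[set i | (b i : nat) == t.+1]|.
Proof.
elim: j => [|j IH].
  rewrite big_ord0; apply/eqP; rewrite cards_eq0; apply/eqP/setP => i; rewrite !inE.
  by case: (b i : nat).
rewrite big_ord_recr /= -IH -(cardsID [set i | (b i : nat) == j.+1] [set i | 0 < b i <= j.+1]).
rewrite addnC; congr (_ + _); apply: eq_card => i; rewrite !inE.
  by case: (ltngtP (b i) j.+1) => h /=; lia.
by case: (ltngtP (b i) j.+1) => h /=; lia.
Qed.

Lemma shift_vals a c t : t < n.+1 ->
  #|[set i | (shift c a i : nat) == t]| = Nv a ((t + (n.+1 - c)) %% n.+1).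
Proof.
move=> tl; rewrite /Nv; apply: eq_card => i; rewrite !inE ffunE /=.
have al := ltn_ord (a i); have cl := ltn_ord c.
rewrite !mod2; try lia.
by case: ifP; case: ifP; move=> *; apply/eqP/eqP; lia.
Qed.

Lemma parking_shift a c : parking (shift c a) = good n (Nv a) ((n.+1 - c) %% n.+1).
Proof.
rewrite parkingE /good; apply: eq_forallb => j.
rewrite count_vals; congr (_ <= _); apply: eq_bigr => t _.
rewrite shift_vals; last by have := ltn_ord j; have := ltn_ord t; lia.
by rewrite modnDmr.
Qed.

Lemma card_shift a : #|[set c : 'I_n.+1 | parking (shift c a)]| = 1.
Proof.
rewrite -(card_good n0 (tot a)).
rewrite -[#|[set r : 'I_n.+1 | good n (Nv a) r]|](card_preimset _ (@oppr_inj _)).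
by apply: eq_card => c; rewrite !inE parking_shift.
Qed.

Lemma shift_inj c : injective (shift c).
Proof.
move=> a b e; apply/ffunP => i; have := congr1 (fun f : F => f i) e.
by rewrite !ffunE; apply: addIr.
Qed.

Lemma pf_char_eq (s : {perm 'I_n}) : pf_char s = (n.+1 ^ (#|porbits s|).-1)%N.
Proof.
pose I := [set a : F | [ffun i => a (s i)] == a].
have inv_shift c a : ([ffun i => shift c a (s i)] == shift c a) = ([ffun i => a (s i)] == a).
  apply/eqP/eqP => e; apply/ffunP => i;
    have := congr1 (fun f : F => f i) e; rewrite !ffunE.
    by move/addIr.
  by move=> ->.
have H1 : \sum_(a in I) #|[set c : 'I_n.+1 | parking (shift c a)]| = #|I|.
  by rewrite (eq_bigr (fun=> 1)) ?sum1_card // => a _; rewrite card_shift.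
have H2 : \sum_(a in I) #|[set c : 'I_n.+1 | parking (shift c a)]| = n.+1 * pf_char s.
  rewrite (eq_bigr (fun a => \sum_(c | parking (shift c a)) 1)); last first.
    by move=> a _; rewrite sum1_card; apply: eq_card => c; rewrite inE.
  rewrite (exchange_big_dep xpredT) //=.
  rewrite (eq_bigr (fun=> pf_char s)); first by rewrite sum_nat_const card_ord.
  move=> c _; rewrite sum1_card /pf_char.
  rewrite [RHS](_ : _ = #|shift c @^-1: [set a | parking a & [ffun i => a (s i)] == a]|); last first.
    by rewrite card_preimset //; exact: shift_inj.
  by apply: eq_card => a; rewrite unfold_in /= !inE inv_shift andbC.
have pos : 0 < #|porbits s|.
  by apply/card_gt0P; exists (porbit s (Ordinal n0)); apply: porbit_in.
move: H2; rewrite H1 /I card_inv card_ord -(prednK pos) expnS => /eqP.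
by rewrite eqn_pmul2l // => /eqP.
Qed.

End Park.

Import GRing.Theory Num.Theory.
Local Open Scope ring_scope.

Section Final.
Variable n : nat.
Hypothesis hn : (1 <= n)%N.
Local Notation R := {mpoly rat[n]}.

Definition hh (k : nat) : R := if odd k then 2%:R *: psum n k else 0.

Lemma shift_psum k : (0 < k <= n)%N -> shiftify (psum n k) = hh k.
Proof.
move=> /andP [k0 kn]; have kl : (k.-1 < n)%N by lia.
rewrite /hh /shiftify /psum (insubT (fun i => i < n)%N kl) /=.
rewrite comp_mpolyXU -tnth_nth tnth_mktuple /=.
by rewrite -oddS prednK.
Qed.

Lemma inv_nat (k : nat) : k != 0%N -> ((k%:R : R)^-1) = (k%:R^-1 : rat) *: 1.
Proof.
move=> k0.
have e1 : (k%:R : R) = (k%:R : rat) *: 1 by rewrite scaler_nat.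
have kq : (k%:R : rat) != 0 by rewrite pnatr_eq0.
have e2 : ((k%:R^-1 : rat) *: 1) * (k%:R : R) = 1.
  by rewrite e1 -scalerAl mul1r scalerA mulVf // scale1r.
have U : (k%:R : R) \is a GRing.unit.
  apply/unitrP; exists ((k%:R^-1 : rat) *: 1); split => //.
  by rewrite mulrC.
by apply: (mulIr U); rewrite mulVr // e2.
Qed.

Definition yy (k : nat) : R := ((n.+1)%:R : rat) *: hh k.

Lemma shiftM (a b : R) : shiftify (a * b) = shiftify a * shiftify b.
Proof. by rewrite /shiftify rmorphM. Qed.

Lemma step1 (s : 'S_n) : shiftify ((pf_char s)%:R * p_cyc s) =
   (((n.+1)%:R : rat)^-1) *: W yy setT s.
Proof.
rewrite shiftM /shiftify rmorph_nat rmorph_prod /=.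
rewrite (eq_bigr (fun C : {set 'I_n} => hh #|C|)); last first.
  move=> C /imsetP [v _ ->]; rewrite -(shift_psum (k := #|porbit s v|)) //.
  by rewrite lt0n card_porbit_neq0 /= (leq_trans (max_card _)) // card_ord.
rewrite /W (eq_bigl (fun C => C \in porbits s)); last by move=> C; case: (C \in porbits s) => //=; apply/subsetP => x _; rewrite inE.
rewrite /yy scaler_prodl scalerA pf_char_eq // mulr_natl -scaler_nat natrX.
congr (_ *: _).
have pos : (0 < #|porbits s|)%N.
  by apply/card_gt0P; exists (porbit s (Ordinal hn)); apply: porbit_in.
rewrite -{2}(prednK pos) exprS mulrA mulVf ?mul1r //.
by rewrite pnatr_eq0.
Qed.

Lemma step2 : \sum_(s : 'S_n) W yy setT s = (n`!)%:R *: cc n yy n.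
Proof.
rewrite -(perm_sum (T := 'I_n) (N := n) _ _ (A := setT)) ?cardsT ?card_ord //.
by apply: eq_bigl => s; apply/esym/subsetP => x _; rewrite inE.
Qed.
Lemma step3 (m : {ffun 'I_n -> 'I_n.+1}) : wt m == n ->
  (((n.+1)%:R : rat)^-1) *: ((zee m)%:R^-1 *: Ym yy m) =
  if all_odd_parts m then
    ((zee m)%:R^-1 * 2%:R ^+ plen m * (n.+1)%:R ^+ (plen m).-1) *: p_lam m
  else 0.
Proof.
move=> wm.
have lpos : (0 < plen m)%N.
  rewrite lt0n; apply/negP => /eqP l0; move: wm.
  have : forall i, (m i : nat) = 0%N.
    move=> i; move/eqP: l0; rewrite /plen sum_nat_eq0 => /forallP /(_ i) /=.
    by move/eqP.
  move=> m0; rewrite /wt (eq_bigr (fun=> 0%N)) ?big1_eq; last by move=> i _; rewrite m0 muln0.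
  by move/eqP => n0; move: hn; rewrite -n0.
rewrite /Ym /yy (eq_bigr (fun i : 'I_n => ((n.+1)%:R : rat) ^+ m i *: hh i.+1 ^+ m i)); last first.
  by move=> i _; rewrite exprZn.
rewrite scaler_prod prodrXr -/(plen m).
case: ifP => odd_m.
  rewrite (eq_bigr (fun i : 'I_n => (2%:R : rat) ^+ m i *: psum n i.+1 ^+ m i)); last first.
    move=> i _; rewrite /hh; case: ifP => oi; first by rewrite exprZn.
    move/forallP: odd_m => /(_ i); rewrite oi /= => /eqP ->.
    by rewrite !expr0 scale1r.
  rewrite scaler_prod prodrXr -/(plen m) -/(p_lam m) !scalerA; congr (_ *: _).
  rewrite -{1}(prednK lpos) exprS.
  have M0 : ((n.+1)%:R : rat) != 0 by rewrite pnatr_eq0.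
  have z0 : ((zee m)%:R : rat) != 0.
    by rewrite pnatr_eq0 -lt0n /zee prodn_gt0 // => i; rewrite muln_gt0 expn_gt0 fact_gt0.
  by rewrite -!mulrA mulrCA mulKf // (mulrC (_ ^+ (plen m).-1)) mulrA.
move/negbT: odd_m => /forallPn [i]; rewrite negb_imply => /andP [ei mi].
rewrite (bigD1 i) //= /hh (negbTE ei) expr0n (negbTE mi) mul0r.
by rewrite !scaler0.
Qed.

End Final.

Theorem theorem2p1 (n : nat) (hn : (1 <= n)%N) :
  SH n =
  \sum_(m : {ffun 'I_n -> 'I_n.+1} | is_partition m && all_odd_parts m)
     ((zee m)%:R^-1 * 2%:R ^+ plen m * (n.+1)%:R ^+ (plen m).-1) *: p_lam m.
Proof.
rewrite /SH /PF shiftM (@inv_nat n (n`!)); last by rewrite -lt0n fact_gt0.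
rewrite /shiftify comp_mpolyZ rmorph1 rmorph_sum -/(shiftify _) /=.
rewrite (eq_bigr (fun s => (((n.+1)%:R : rat)^-1) *: W (yy n) setT s)); last first.
  by move=> s _; rewrite -(@step1 n hn s).
rewrite -scaler_sumr (@step2 n) -scalerAl mul1r !scalerA.
rewrite mulrAC mulVf ?mul1r; last by rewrite pnatr_eq0 -lt0n fact_gt0.
rewrite /cc scaler_sumr big_mkcondr /=.
apply: eq_big => [m|m wm]; first by [].
exact: (@step3 n hn m wm).
Qed.
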